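(* Let $L\in\mathbb{R}^{n\times n}$ be a real symmetric positive semidefinite matrix, let $U_k\in\mathbb{R}^{n\times k}$ have orthonormal columns that are eigenvectors of $L$, and let $\mathrm{span}(U_k)$ denote its column space. Let $\beta>0$, let $\mathrm{E},\mathrm{E}_{\text{model}}\in\mathbb{R}$, and set $a=\mathrm{E}-\mathrm{E}_{\text{model}}$. For $\phi,\rho\in\mathbb{R}^n$ define \[ \mathcal{L}(\phi,\rho)=\beta\,\|L\phi-\rho\|_2^2+\Big(a+\tfrac12\,\phi^\top\rho\Big)^2 . \] For $\phi\in\mathrm{span}(U_k)$ let $\rho^\star(\phi)=L\phi-t^\star(\phi)\phi$ with $t^\star(\phi)=\dfrac{a+\frac12\phi^\top L\phi}{2\beta+\frac12\|\phi\|_2^2}$ (the unique minimizer of $\rho\mapsto\mathcal{L}(\phi,\rho)$ over $\mathrm{span}(U_k)$), and define $A(\phi)=a+\tfrac12\,\phi^\top L\phi$. Then \[ \widetilde{\mathcal{L}}(\phi):=\mathcal{L}\big(\phi,\rho^\star(\phi)\big)=A(\phi)^2\,\frac{4\beta}{4\beta+\|\phi\|_2^2}\;\le\;A(\phi)^2, \] with equality if and only if $A(\phi)=0$ or $\phi=0$.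
   Context: $\mathcal{L}$ is the (squared, $L^2$) surrogate training objective combining a Poisson-equation residual $\|L\phi-\rho\|^2$ weighted by $\beta$ with a squared energy term involving the electrostatic energy $\frac12\phi^\top\rho$; $\phi$ plays the role of a potential and $\rho$ of charges on the nodes of a graph with Laplacian $L$. *)

(* Defs.v *)
From HB Require Import structures.
From mathcomp Require Import all_boot all_order all_algebra.
Set Implicit Arguments. Unset Strict Implicit. Unset Printing Implicit Defensive.
Import Order.TTheory GRing.Theory Num.Theory.
Local Open Scope ring_scope.

Definition dotv (R : realFieldType) (n : nat) (x y : 'cV[R]_n) : R := (x^T *m y) 0 0.
Definition sqnorm (R : realFieldType) (n : nat) (x : 'cV[R]_n) : R := dotv x x.

Definition psd (R : realFieldType) (n : nat) (L : 'M[R]_n) : Prop :=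
  L^T = L /\ forall x : 'cV[R]_n, 0 <= dotv x (L *m x).

Definition orthonormal_cols (R : realFieldType) (n k : nat) (U : 'M[R]_(n, k)) : Prop :=
  U^T *m U = 1%:M.
Definition eigen_cols (R : realFieldType) (n k : nat) (L : 'M[R]_n) (U : 'M[R]_(n, k)) : Prop :=
  forall j : 'I_k, exists lam : R, L *m col j U = lam *: col j U.

Definition in_span (R : realFieldType) (n k : nat) (U : 'M[R]_(n, k)) (x : 'cV[R]_n) : Prop :=
  exists c : 'cV[R]_k, x = U *m c.

Definition loss (R : realFieldType) (n : nat) (beta a : R) (L : 'M[R]_n) (phi rho : 'cV[R]_n) : R :=
  beta * sqnorm (L *m phi - rho) + (a + dotv phi rho / 2) ^+ 2.

Definition Aphi (R : realFieldType) (n : nat) (a : R) (L : 'M[R]_n) (phi : 'cV[R]_n) : R :=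
  a + dotv phi (L *m phi) / 2.

Definition tstar (R : realFieldType) (n : nat) (beta a : R) (L : 'M[R]_n) (phi : 'cV[R]_n) : R :=
  Aphi a L phi / (2 * beta + sqnorm phi / 2).

Definition rhostar (R : realFieldType) (n : nat) (beta a : R) (L : 'M[R]_n) (phi : 'cV[R]_n) : 'cV[R]_n :=
  L *m phi - tstar beta a L phi *: phi.

(* Main.v *)
Require Import Defs.
From HB Require Import structures.
From mathcomp Require Import all_boot all_order all_algebra.
From mathcomp Require Import ring lra.
Import Order.TTheory GRing.Theory Num.Theory.
Local Open Scope ring_scope.
Set Implicit Arguments.

Section D.
Variables (R : realFieldType) (n : nat).
Implicit Types x y z : 'cV[R]_n.

Lemma dotvE x y : dotv x y = \sum_i x i 0 * y i 0.
Proof. by rewrite /dotv !mxE; apply: eq_bigr => i _; rewrite mxE. Qed.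

Lemma dotvC x y : dotv x y = dotv y x.
Proof. by rewrite !dotvE; apply: eq_bigr => i _; rewrite mulrC. Qed.

Lemma dotvDr x y z : dotv x (y + z) = dotv x y + dotv x z.
Proof. by rewrite !dotvE -big_split; apply: eq_bigr => i _; rewrite mxE mulrDr. Qed.

Lemma dotvZr x (c : R) y : dotv x (c *: y) = c * dotv x y.
Proof. by rewrite !dotvE mulr_sumr; apply: eq_bigr => i _; rewrite mxE mulrCA. Qed.

Lemma dotvNr x y : dotv x (- y) = - dotv x y.
Proof. by rewrite -scaleN1r dotvZr mulN1r. Qed.

Lemma dotvBr x y z : dotv x (y - z) = dotv x y - dotv x z.
Proof. by rewrite dotvDr dotvNr. Qed.

Lemma dotvDl x y z : dotv (y + z) x = dotv y x + dotv z x.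
Proof. by rewrite !(dotvC _ x) dotvDr. Qed.
Lemma dotvZl x (c : R) y : dotv (c *: y) x = c * dotv y x.
Proof. by rewrite !(dotvC _ x) dotvZr. Qed.

Lemma sqnorm_ge0 x : 0 <= sqnorm x.
Proof. by rewrite /sqnorm dotvE; apply: sumr_ge0 => i _; rewrite -expr2 sqr_ge0. Qed.

Lemma sqnorm_eq0 x : sqnorm x = 0 -> x = 0.
Proof.
rewrite /sqnorm dotvE => /eqP; rewrite psumr_eq0; last by move=> i _; rewrite -expr2 sqr_ge0.
move/allP => H; apply/matrixP => i j; rewrite (ord1 j) mxE.
by have := H i (mem_index_enum _); rewrite /= mulf_eq0 orbb => /eqP.
Qed.
End D.
Section M.
Variables (R : realFieldType) (n : nat).

Lemma key (beta a : R) (L : 'M[R]_n) (phi rho : 'cV[R]_n) :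
  0 < beta ->
  let t := tstar beta a L phi in
  let e := (L *m phi - rho) - t *: phi in
  loss beta a L phi rho = loss beta a L phi (rhostar beta a L phi)
     + beta * sqnorm e + (dotv phi e) ^+ 2 / 4.
Proof.
move=> hb t e.
have hN := @sqnorm_ge0 _ _ phi.
have hD : 2 * beta + sqnorm phi / 2 != 0 by rewrite gt_eqF //; lra.
have ht : t * (2 * beta + sqnorm phi / 2) = Aphi a L phi by rewrite /t /tstar divfK.
have ha : a = t * (2 * beta + sqnorm phi / 2) - dotv phi (L *m phi) / 2.
  by rewrite ht /Aphi addrK.
have h1 : L *m phi - rho = t *: phi + e by rewrite /e addrCA subrr addr0.
have hr : rho = L *m phi - (t *: phi + e) by rewrite -h1 opprB addrC subrK.
have h2 : L *m phi - rhostar beta a L phi = t *: phi by rewrite /rhostar opprB addrC subrK.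
clearbody e.
rewrite /loss h1 h2 {1}hr /rhostar -/t.
clearbody t. rewrite {1 2}ha /sqnorm !(dotvBr, dotvDr, dotvDl, dotvZr, dotvZl) (@dotvC _ _ e phi).

by field.
Qed.
End M.

Lemma span_L (R : realFieldType) (n k : nat) (L : 'M[R]_n) (U : 'M[R]_(n, k)) phi :
  orthonormal_cols U -> eigen_cols L U -> in_span U phi -> in_span U (L *m phi).
Proof.
move=> hU hE [c ->].
exists ((U^T *m L *m U) *m c); rewrite !mulmxA; congr (_ *m _).
have HC : forall j, col j (L *m U) = col j (U *m U^T *m L *m U).
  move=> j; have [lam hl] := hE j.
  rewrite !colE -!mulmxA -!colE hl -!scalemxAr; congr (_ *: _).
  by rewrite mulmxA -(mulmxA U) !colE (mulmxA U^T) hU mul1mx.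
apply/matrixP => i j; have := congr1 (fun v : 'cV_n => v i 0) (HC j).
by rewrite !mxE /= => ->.
Qed.

Theorem theorem2 (R : realFieldType) (n k : nat) (L : 'M[R]_n) (U : 'M[R]_(n, k))
    (beta E Emodel : R) (phi : 'cV[R]_n) :
  psd L -> orthonormal_cols U -> eigen_cols L U -> 0 < beta -> in_span U phi ->
  let a := E - Emodel in
  (* rho*(phi) is the unique minimizer of rho |-> loss(phi, rho) over span(U) *)
  (in_span U (rhostar beta a L phi) /\
   forall rho : 'cV[R]_n, in_span U rho ->
     loss beta a L phi (rhostar beta a L phi) <= loss beta a L phi rho /\
     (loss beta a L phi rho = loss beta a L phi (rhostar beta a L phi) ->
        rho = rhostar beta a L phi)) /\
  (* closed form, bound, and equality case *)
  loss beta a L phi (rhostar beta a L phi)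
    = Aphi a L phi ^+ 2 * (4 * beta / (4 * beta + sqnorm phi)) /\
  loss beta a L phi (rhostar beta a L phi) <= Aphi a L phi ^+ 2 /\
  (loss beta a L phi (rhostar beta a L phi) = Aphi a L phi ^+ 2 <->
     Aphi a L phi = 0 \/ phi = 0).
Proof.
move=> _ hU hE hb hphi a.
have hN := @sqnorm_ge0 _ _ phi.
have hD : 2 * beta + sqnorm phi / 2 != 0 by rewrite gt_eqF //; lra.
have hD4 : 4 * beta + sqnorm phi != 0 by rewrite gt_eqF //; lra.
have closed : loss beta a L phi (rhostar beta a L phi)
    = Aphi a L phi ^+ 2 * (4 * beta / (4 * beta + sqnorm phi)).
  have h2 : L *m phi - rhostar beta a L phi = tstar beta a L phi *: phi
    by rewrite /rhostar opprB addrC subrK.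
  rewrite /loss h2 /rhostar /tstar /sqnorm !(dotvBr, dotvZr, dotvZl) /Aphi.
  rewrite /sqnorm in hD hD4.
  by field; exact: hD4.
have hfrac : 4 * beta / (4 * beta + sqnorm phi) <= 1.
  by rewrite ler_pdivrMr ?mul1r; lra.
have hA2 := sqr_ge0 (Aphi a L phi).
split; [split|split; [exact: closed|split]].
- case: hphi => c hc; case: (span_L hU hE (ex_intro _ c hc)) => d hd.
  by exists (d - tstar beta a L phi *: c); rewrite /rhostar hd hc mulmxBr scalemxAr.
- move=> rho _; rewrite (@key _ _ beta a L phi rho hb).
  set e := (_ - _ - _ *: phi).
  have hS := @sqnorm_ge0 _ _ e.
  have hp := sqr_ge0 (dotv phi e).
  split; first by nra.
  move=> heq.
  have hS0 : sqnorm e = 0 by nra.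
  have e0 := @sqnorm_eq0 _ _ _ hS0.
  move: e0; rewrite /e => /eqP; rewrite subr_eq0 => /eqP h.
  by rewrite /rhostar -h opprB addrC subrK.
- rewrite closed; nra.
- rewrite closed; split.
  + move=> h.
    have : Aphi a L phi ^+ 2 * (4 * beta / (4 * beta + sqnorm phi) - 1) = 0.
      by rewrite mulrBr mulr1 h subrr.
    move/eqP; rewrite mulf_eq0 => /orP [|].
      by rewrite sqrf_eq0 => /eqP; left.
    rewrite subr_eq0 => /eqP h1; right; apply: (@sqnorm_eq0 _ _).
    have : 4 * beta = 1 * (4 * beta + sqnorm phi) by rewrite -[X in _ = X * _]h1 divfK.
    lra.
  + case=> [->|->]; first by rewrite expr0n /= mul0r.
    have -> : sqnorm (0 : 'cV[R]_n) = 0 by rewrite /sqnorm dotvE big1 // => i _; rewrite mxE mul0r.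
    by rewrite addr0 divff ?mulr1 // gt_eqF //; lra.
Qed.
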